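(* Consider the algorithm AOD described in the context, with known horizon $T$, under assumption (A3). For any interval $J=[i,j]\in\mathcal{D}$ and every $t\in J$ with $t\le T$, \[ \sum_{u=i}^t f_u(\mathbf{w}_u)-\sum_{u=i}^t f_u(\mathbf{w}_{u,J})\le\sqrt{3(t-i+1)c(t)}, \] where $c(t)=1+\ln t+\ln(1+\log_2 T)+\ln\frac{5+3\ln(1+t)}{2}$.
   Context: Online convex optimization: $\Omega\subseteq\mathbb{R}^d$ convex; in round $t=1,\ldots,T$ the learner plays $\mathbf{w}_t\in\Omega$ and then a convex $f_t:\Omega\to\mathbb{R}$ is revealed. Assumption (A3): $0\le f_t(\mathbf{w})\le1$ for all $\mathbf{w}\in\Omega$, $t\in[T]$. (Gradients $\nabla f_t$ are assumed to exist; $D,G>0$ are constants; $\Pi_\Omega$ is Euclidean projection.) Dense geometric covering intervals: $\mathcal{D}=\bigcup_{k\ge0,\,2^k\le T}\mathcal{D}_k$, $\mathcal{D}_k=\{[(i-1)2^k+1,\,i2^k]: i=1,2,\ldots\}$. Algorithm AOD: for each $I\in\mathcal{D}$ an expert $E_I$ runs online gradient descent $\mathbf{w}_{t+1,I}=\Pi_\Omega[\mathbf{w}_{t,I}-\eta_I\nabla f_t(\mathbf{w}_{t,I})]$, $\eta_I=D/(G\sqrt{|I|})$, over rounds $t\in I$; its initial point is arbitrary if $\min I=1$, and otherwise is the next iterate of the expert of the preceding same-length interval $[\min I-|I|,\min I-1]$ after processing $f_{\min I-1}$. Active experts at round $t$: $\mathcal{A}_t=\{E_I:I\in\mathcal{D},t\in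 I\}$. Meta-algorithm (AdaNormalHedge): $\Phi(R,C)=\exp([R]_+^2/(3C))$, $[x]_+=\max(0,x)$, $\Phi(0,0)=1$, $w(R,C)=\tfrac12(\Phi(R+1,C+1)-\Phi(R-1,C+1))$, $R_{t-1,I}=\sum_{u=\min I}^{t-1}(f_u(\mathbf{w}_u)-f_u(\mathbf{w}_{u,I}))$, $C_{t-1,I}=\sum_{u=\min I}^{t-1}|f_u(\mathbf{w}_u)-f_u(\mathbf{w}_{u,I})|$, $p_{t,I}=w(R_{t-1,I},C_{t-1,I})/\sum_{E_{I'}\in\mathcal{A}_t}w(R_{t-1,I'},C_{t-1,I'})$, played point $\mathbf{w}_t=\sum_{E_I\in\mathcal{A}_t}p_{t,I}\mathbf{w}_{t,I}$. *)

(* Defs.v *)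
From HB Require Import structures.
From mathcomp Require Import all_boot all_order all_algebra.
From mathcomp Require Import reals.
From mathcomp Require Import sequences exp.
Set Implicit Arguments. Unset Strict Implicit. Unset Printing Implicit Defensive.
Import Order.TTheory GRing.Theory Num.Theory.
Local Open Scope ring_scope.

Section AOD.
Variable R : realType.
Variable d : nat.
Notation vec := 'rV[R]_d.

Definition dotv (u v : vec) : R := \sum_(j < d) u 0 j * v 0 j.
Definition sqnorm (u : vec) : R := dotv u u.

(* Dense geometric covering intervals.  The interval
   [(i-1) 2^k + 1, i 2^k] is encoded by the pair (k, i). *)
Definition inD (T k i : nat) : bool := (2 ^ k <= T)%N && (0 < i)%N.
Definition lo (k i : nat) : nat := ((i - 1) * 2 ^ k).+1.
Definition hi (k i : nat) : nat := (i * 2 ^ k)%N.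
Definition inI (k i t : nat) : bool := (lo k i <= t <= hi k i)%N.
Definition idx (k t : nat) : nat := ((t - 1) %/ 2 ^ k).+1.

Definition eta (D G : R) (k : nat) : R := D / (G * Num.sqrt ((2 ^ k)%N%:R)).

(* AdaNormalHedge potential and weight. With C = 0 the formula gives
   exp(0) = 1 (since x/0 = 0 in MathComp), matching Phi(0,0) = 1. *)
Definition Phi (r c : R) : R := expR (Num.max r 0 ^+ 2 / (3 * c)).
Definition wgt (r c : R) : R := (Phi (r + 1) (c + 1) - Phi (r - 1) (c + 1)) / 2.

Variables (f : nat -> vec -> R) (w : nat -> vec) (wI : nat -> nat -> nat -> vec).

(* R_{t-1,I} and C_{t-1,I} for I = (k,i) *)
Definition Rg (k i t : nat) : R :=
  \sum_(lo k i <= u < t) (f u (w u) - f u (wI k i u)).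
Definition Cg (k i t : nat) : R :=
  \sum_(lo k i <= u < t) `|f u (w u) - f u (wI k i u)|.

Definition uw (k t : nat) : R := wgt (Rg k (idx k t) t) (Cg k (idx k t) t).

(* The active experts at round t <= T are exactly one per level k with
   2^k <= T, namely (k, idx k t). *)
Definition wsum (T t : nat) : R := \sum_(0 <= k < T.+1 | (2 ^ k <= T)%N) uw k t.
Definition meta_point (T t : nat) : vec :=
  \sum_(0 <= k < T.+1 | (2 ^ k <= T)%N) (uw k t / wsum T t) *: wI k (idx k t) t.

End AOD.

Definition OCO_A3 (R : realType) (d T : nat) (Omega : 'rV[R]_d -> Prop)
  (f : nat -> 'rV[R]_d -> R) (grad : nat -> 'rV[R]_d -> 'rV[R]_d)
  (proj : 'rV[R]_d -> 'rV[R]_d) : Prop :=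
  (forall x y (l : R), Omega x -> Omega y -> 0 <= l <= 1 ->
     Omega (l *: x + (1 - l) *: y)) /\
  (forall x, Omega (proj x)) /\
  (forall x y, Omega y -> sqnorm (x - proj x) <= sqnorm (x - y)) /\
  (forall t, (1 <= t <= T)%N ->
     (forall x y (l : R), Omega x -> Omega y -> 0 <= l <= 1 ->
        f t (l *: x + (1 - l) *: y) <= l * f t x + (1 - l) * f t y) /\
     (forall x y, Omega x -> Omega y -> f t x + dotv (grad t x) (y - x) <= f t y) /\
     (forall x, Omega x -> 0 <= f t x <= 1)).

(* The run of AOD for horizon T: expert iterates wI k i t (for t in the
   interval (k,i)) and played points w t. *)
Definition AOD_run (R : realType) (d T : nat) (D G : R) (Omega : 'rV[R]_d -> Prop)
  (f : nat -> 'rV[R]_d -> R) (grad : nat -> 'rV[R]_d -> 'rV[R]_d)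
  (proj : 'rV[R]_d -> 'rV[R]_d)
  (wI : nat -> nat -> nat -> 'rV[R]_d) (w : nat -> 'rV[R]_d) : Prop :=
  (forall k, (2 ^ k <= T)%N -> Omega (wI k 1%N 1%N)) /\
  (* initial point of an expert with min I > 1: next iterate of the expert of
     the preceding same-length interval after processing f_{min I - 1} *)
  (forall k i, inD T k i -> (1 < i)%N -> (lo k i <= T)%N ->
     wI k i (lo k i) =
       proj (wI k i.-1 (lo k i).-1
             - eta D G k *: grad (lo k i).-1 (wI k i.-1 (lo k i).-1))) /\
  (forall k i t, inD T k i -> inI k i t -> inI k i t.+1 -> (t.+1 <= T)%N ->
     wI k i t.+1 = proj (wI k i t - eta D G k *: grad t (wI k i t))) /\
  (forall t, (1 <= t <= T)%N -> w t = meta_point f w wI T t).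

(* Main.v *)
Require Import Defs.
From HB Require Import structures.
From mathcomp Require Import all_boot all_order all_algebra.
From mathcomp Require Import reals.
From mathcomp Require Import sequences exp.
From mathcomp Require Import ring lra zify.
Import Order.TTheory GRing.Theory Num.Theory.
Local Open Scope ring_scope.

Ltac fsc := field; rewrite ?andbT; repeat (apply/andP; split); lra.

Section Analytic.
Variable R : realType.
Implicit Types x y z : R.

Lemma exp_tangent (a m : R) : (1 + (a - m)) * expR m <= expR a.
Proof.
have h := expR_ge1Dx (a - m).
have := ler_wpM2r (expR_ge0 m) h.
by rewrite -expRD subrK.
Qed.

Lemma exp_cvx l x y : 0 <= l <= 1 ->
  expR (l * x + (1 - l) * y) <= l * expR x + (1 - l) * expR y.
Proof.
move=> /andP[l0 l1].
have hx := exp_tangent x (l * x + (1 - l) * y).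
have hy := exp_tangent y (l * x + (1 - l) * y).
have l1' : 0 <= 1 - l by lra.
have e : expR (l * x + (1 - l) * y) =
  l * ((1 + (x - (l * x + (1 - l) * y))) * expR (l * x + (1 - l) * y)) +
  (1 - l) * ((1 + (y - (l * x + (1 - l) * y))) * expR (l * x + (1 - l) * y)).
  ring.
rewrite [X in X <= _]e; apply: lerD; apply: ler_wpM2l => //.
Qed.

Lemma expR_le_inv z : z < 1 -> expR z <= (1 - z)^-1.
Proof.
move=> z1.
have h := expR_ge1Dx (- z).
rewrite expRN in h.
have p : 0 < 1 - z by lra.
rewrite -[expR z]invrK lef_pV2 ?posrE ?invr_gt0 ?expR_gt0 //.
Qed.

Lemma expR_sub1 z : 0 <= z <= 1/3 -> expR z - 1 <= 3/2 * z.
Proof.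
move=> /andP[z0 z3].
have := @expR_le_inv z ltac:(lra).
have p : 0 < 1 - z by lra.
move=> h; apply: (le_trans (lerB h (lexx 1))).
rewrite -subr_ge0.
have -> : 3 / 2 * z - ((1 - z)^-1 - 1) = (z * (1 - 3 * z) / 2) / (1 - z).
  by field; lra.
apply: divr_ge0; last lra.
apply: divr_ge0; [nra | lra].
Qed.

Lemma poly_aux (p : R) : 5/6 <= p <= 1 -> 1 - p ^+ 4 <= 9/2 * (1 - p) * p ^+ 2.
Proof.
move=> /andP[p5 p1].
have h0 : 0 <= (p - 5/6) ^+ 2 * (1 - (p - 5/6)) by apply: mulr_ge0; [exact: sqr_ge0 | lra].
have h1 : 0 <= 9/2 * p ^+ 2 - (1 + p) * (1 + p ^+ 2).
  have -> : 9/2 * p ^+ 2 - (1 + p) * (1 + p ^+ 2) =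
     (p - 5/6) ^+ 2 * (1 - (p - 5/6)) + 11/4 * (p - 5/6) + 1/54 by field.
  lra.
rewrite -subr_ge0.
have -> : 9/2 * (1 - p) * p ^+ 2 - (1 - p ^+ 4) = (1 - p) * (9/2 * p ^+ 2 - (1 + p) * (1 + p ^+ 2)) by field.
apply: mulr_ge0 => //; lra.
Qed.

Lemma cosh_bound (q : R) : 0 <= q <= 2/3 -> expR q + expR (- q) <= 2 + 81/64 * q ^+ 2.
Proof.
move=> /andP[q0 q1].
set p := 1 - q / 4.
set a := expR (q / 4).
set b := expR (- (q / 4)).
have ab : a * b = 1 by rewrite /a /b -expRD subrr expR0.
have bp : p <= b by rewrite /p /b; have := expR_ge1Dx (- (q / 4)); lra.
have pp : 0 < p by rewrite /p; lra.
have ap : a <= p^-1 by rewrite /a /p; apply: expR_le_inv; lra.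
have eq : expR q = a ^+ 4 by rewrite /a -expRM_natl; congr expR; field.
have enq : expR (- q) = b ^+ 4 by rewrite /b -expRM_natl; congr expR; field.
have ba : b <= a by rewrite /a /b ler_expR; lra.
have b0 : 0 < b by exact: expR_gt0.
have X0 : 0 <= a ^+ 2 - b ^+ 2 by rewrite subr_ge0 ler_pXn2r // ?nnegrE; lra.
have X1 : a ^+ 2 - b ^+ 2 <= (1 - p ^+ 4) / p ^+ 2.
  have -> : (1 - p ^+ 4) / p ^+ 2 = (p^-1) ^+ 2 - p ^+ 2 by field; lra.
  apply: lerB; rewrite ler_pXn2r // ?nnegrE; lra.
have X2 : (1 - p ^+ 4) / p ^+ 2 <= 9/2 * (1 - p).
  rewrite ler_pdivrMr ?exprn_gt0 //; apply: poly_aux; rewrite /p; lra.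
have X3 : (a ^+ 2 - b ^+ 2) ^+ 2 <= (9/2 * (1 - p)) ^+ 2.
  rewrite ler_pXn2r // ?nnegrE //; [lra | lra].
rewrite eq enq.
have -> : a ^+ 4 + b ^+ 4 = (a ^+ 2 - b ^+ 2) ^+ 2 + 2 * (a * b) ^+ 2 by ring.
rewrite ab expr1n mulr1.
have -> : 81/64 * q ^+ 2 = (9/2 * (1 - p)) ^+ 2 by rewrite /p; field.
lra.
Qed.

Lemma maxr0_l (r : R) : 0 <= r -> Num.max r 0 = r.
Proof. by move=> h; rewrite /Order.max ltNge h. Qed.
Lemma maxr0_r (r : R) : r <= 0 -> Num.max r 0 = 0.
Proof. move=> h; rewrite /Order.max; case: ltP => h2 //; apply/eqP; by rewrite eq_le h h2. Qed.
Lemma maxr0_ge0 (r : R) : 0 <= Num.max r 0.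
Proof. by rewrite /Order.max; case: ltP => // /ltW. Qed.
Lemma maxr0_ge (r : R) : r <= Num.max r 0.
Proof. by rewrite /Order.max; case: ltP => // /ltW. Qed.

Lemma Phi_pos (r c : R) : 0 <= r -> Phi r c = expR (r ^+ 2 / (3 * c)).
Proof. by move=> r0; rewrite /Phi maxr0_l. Qed.

Lemma Phi_neg (r c : R) : r <= 0 -> Phi r c = 1.
Proof. by move=> r0; rewrite /Phi maxr0_r // expr0n /= mul0r expR0. Qed.

Lemma max0_sqr_le (r : R) : Num.max r 0 ^+ 2 <= r ^+ 2.
Proof.
have := le_total 0 r; case/orP => r0; first by rewrite maxr0_l.
by rewrite maxr0_r // expr0n /= sqr_ge0.
Qed.

Lemma Phi_le (r c : R) : 0 <= c -> Phi r c <= expR (r ^+ 2 / (3 * c)).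
Proof.
move=> c0; rewrite /Phi ler_expR; apply: ler_wpM2r; last exact: max0_sqr_le.
rewrite invr_ge0; lra.
Qed.

Lemma Phi_ge1 (r c : R) : 0 <= c -> 1 <= Phi r c.
Proof.
move=> c0; rewrite /Phi -[X in X <= _]expR0 ler_expR; apply: divr_ge0; first exact: sqr_ge0.
lra.
Qed.

Lemma Phi_mono (r r' c : R) : 0 <= c -> r <= r' -> Phi r c <= Phi r' c.
Proof.
move=> c0 rr; rewrite /Phi ler_expR; apply: ler_wpM2r; first by rewrite invr_ge0; lra.
have h1 := maxr0_ge0 r.
have h2 : Num.max r 0 <= Num.max r' 0.
  have := le_total r 0; case/orP => r0; first by rewrite maxr0_r // maxr0_ge0.
  by rewrite maxr0_l // (le_trans rr (maxr0_ge r')).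
rewrite ler_pXn2r // ?nnegrE //; exact: le_trans h2.
Qed.

Definition Kc : R := expR (17/15) / 2.

Lemma Kc_ge : 1/2 <= Kc.
Proof.
rewrite /Kc; have : 1 <= expR (17/15 : R) by rewrite -[X in X <= _]expR0 ler_expR; lra.
lra.
Qed.

Lemma core (r C : R) : 0 <= C -> `|r| <= C ->
  (Phi (r + 1) (C + 1) + Phi (r - 1) (C + 1)) / 2 <= Phi r C + Kc / (C + 1).
Proof.
move=> C0 rC.
have C1 : 0 < C + 1 by lra.
have Kh := Kc_ge.
case: (boolP (r <= 0)) => r0.
  rewrite (@Phi_neg r) // (@Phi_neg (r - 1)); last lra.
  have d0 : 0 <= (3 * (C + 1))^-1 by rewrite invr_ge0; lra.
  have d1 : (3 * (C + 1))^-1 <= 1/3.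
    rewrite div1r lef_pV2 ?posrE; lra.
  have hP : Phi (r + 1) (C + 1) <= expR ((3 * (C + 1))^-1).
    rewrite /Phi ler_expR; rewrite -[X in _ <= X]mul1r; apply: ler_wpM2r => //.
    have m0 := maxr0_ge0 (r + 1).
    have m1 : Num.max (r + 1) 0 <= 1.
      have := le_total (r + 1) 0; case/orP => r1; first by rewrite maxr0_r.
      rewrite maxr0_l; lra.
    rewrite -[X in _ <= X](expr1n _ 2); rewrite ler_pXn2r // ?nnegrE //; lra.
  have he := @expR_sub1 ((3 * (C + 1))^-1) ltac:(lra).
  have : 3 / 2 * (3 * (C + 1))^-1 <= 2 * Kc / (C + 1).
    have y0 : 0 < (C + 1)^-1 by rewrite invr_gt0.
    rewrite invfM; nra.
  lra.
have rp : 0 < r by rewrite ltNge.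
have rC' : r <= C by exact: ler_normlW.
have Cp : 0 < C by lra.
set A := r ^+ 2 / (3 * C).
set dl := (3 * (C + 1))^-1.
set q := 2 * dl * r.
set m := A + dl * (1 - 3 * A).
have A0 : 0 <= A by rewrite /A; apply: divr_ge0; [exact: sqr_ge0 | lra].
have dl0 : 0 < dl by rewrite /dl invr_gt0; lra.
have dl1 : dl <= 1/3 by rewrite /dl div1r lef_pV2 ?posrE; lra.
have e1 : (r + 1) ^+ 2 / (3 * (C + 1)) = m + q.
  rewrite /m /q /dl /A; field; apply/andP; split; lra.
have e2 : (r - 1) ^+ 2 / (3 * (C + 1)) = m + - q.
  rewrite /m /q /dl /A; field; apply/andP; split; lra.
rewrite (@Phi_pos (r + 1)); last lra.
rewrite e1.
have h2 := @Phi_le (r - 1) (C + 1) ltac:(lra).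
rewrite e2 in h2.
rewrite (@Phi_pos r); last lra.
rewrite -/A.
have qe : q * (3 * (C + 1)) = 2 * r by rewrite /q /dl; field; lra.
have q0 : 0 <= q by rewrite /q; apply: mulr_ge0; lra.
have q1 : q <= 2/3 by nra.
have hc := @cosh_bound q ltac:(lra).
have hsum : expR (m + q) + expR (m + - q) <= expR m * (2 + 81/64 * q ^+ 2).
  rewrite (expRD m q) (expRD m (- q)) -mulrDr; apply: ler_wpM2l; [exact: expR_ge0 | exact: hc].
have qA : q ^+ 2 <= 4 * dl * A.
  rewrite -subr_ge0.
  have -> : 4 * dl * A - q ^+ 2 = 4 * r ^+ 2 / (9 * C * (C + 1) ^+ 2).
    rewrite /q /dl /A; field; apply/andP; split; lra.
  apply: divr_ge0; first by have := sqr_ge0 r; lra.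
  apply: mulr_ge0; [lra | exact: sqr_ge0].
have em : 0 < expR m := expR_gt0 m.
have hx : expR m * (1 + 81/32 * dl * A) <= expR (m + 81/32 * dl * A).
  rewrite (expRD m); apply: ler_wpM2l; [lra | exact: expR_ge1Dx].
have eA : m + 81/32 * dl * A = A + dl * (1 - 15/32 * A) by rewrite /m; field.
rewrite eA in hx.
have step1 : (expR (m + q) + Phi (r - 1) (C + 1)) / 2 <= expR (A + dl * (1 - 15/32 * A)).
  have : expR m * (2 + 81/64 * q ^+ 2) <= 2 * (expR m * (1 + 81/32 * dl * A)) by nra.
  lra.
apply: (le_trans step1).
have Kp : 0 <= Kc / (C + 1) by apply: divr_ge0; lra.
case: (boolP (1 <= 15/32 * A)) => hA.
  have : expR (A + dl * (1 - 15 / 32 * A)) <= expR A by rewrite ler_expR; nra.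
  lra.
have hA' : 15/32 * A < 1 by rewrite ltNge.
set z := dl * (1 - 15/32 * A).
have z0 : 0 <= z by rewrite /z; apply: mulr_ge0; lra.
have z1 : z <= 1/3 by rewrite /z; nra.
have hz := @expR_sub1 z ltac:(lra).
rewrite expRD.
have eAp := expR_gt0 A.
have hB : 1 - 15/32 * A <= expR (- (15/32 * A)) by have := expR_ge1Dx (- (15/32 * A)); lra.
have hC : expR A * expR (- (15/32 * A)) <= expR (17/15).
  rewrite -expRD ler_expR; lra.
have hD : expR A * (1 - 15/32 * A) <= expR (17/15).
  apply: le_trans hC; apply: ler_wpM2l; lra.
have hE : expR A * z <= dl * expR (17/15).
  rewrite /z mulrCA; apply: ler_wpM2l; lra.
have -> : Kc / (C + 1) = 3/2 * dl * expR (17/15) by rewrite /Kc /dl; field; lra.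
have : expR A * expR z <= expR A * (1 + 3/2 * z) by apply: ler_wpM2l; lra.
nra.
Qed.

Lemma persp (x y P Q l : R) : 0 <= l <= 1 -> 0 < P -> 0 < Q ->
  ((1 - l) * x + l * y) ^+ 2 / ((1 - l) * P + l * Q) <= (1 - l) * (x ^+ 2 / P) + l * (y ^+ 2 / Q).
Proof.
move=> /andP[l0 l1] P0 Q0.
have D0 : 0 < (1 - l) * P + l * Q by nra.
rewrite ler_pdivrMr //.
rewrite -subr_ge0.
have -> : ((1 - l) * (x ^+ 2 / P) + l * (y ^+ 2 / Q)) * ((1 - l) * P + l * Q) -
   ((1 - l) * x + l * y) ^+ 2 = (1 - l) * l * P * Q * (x / P - y / Q) ^+ 2.
  field; apply/andP; split; lra.
apply: mulr_ge0; last exact: sqr_ge0.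
apply: mulr_ge0; last lra.
apply: mulr_ge0; last lra.
apply: mulr_ge0; lra.
Qed.

Lemma step_gen (Rr C a s : R) : 0 <= C -> `|Rr| <= C -> 0 < a <= 1 -> (s = 1 \/ s = -1) ->
  Phi (Rr + s * a) (C + a) <= (1 - a) * Phi Rr C + a * Phi (Rr + s) (C + 1).
Proof.
move=> C0 rC /andP[a0 a1] hs.
set X0 := Num.max Rr 0.
set Y0 := Num.max (Rr + s) 0.
have hX0 := maxr0_ge0 Rr.
have hY0 := maxr0_ge0 (Rr + s).
have hM : Num.max (Rr + s * a) 0 <= (1 - a) * X0 + a * Y0.
  have hXg := maxr0_ge Rr. have hYg := maxr0_ge (Rr + s).
  have := le_total (Rr + s * a) 0; case/orP => h.
    rewrite maxr0_r //; rewrite /X0 /Y0; nra.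
  rewrite maxr0_l //; rewrite /X0 /Y0.
  have -> : Rr + s * a = (1 - a) * Rr + a * (Rr + s) by ring.
  nra.
have hM0 := maxr0_ge0 (Rr + s * a).
have hsq : Num.max (Rr + s * a) 0 ^+ 2 <= ((1 - a) * X0 + a * Y0) ^+ 2.
  rewrite ler_pXn2r // ?nnegrE //; nra.
have hexp : Num.max (Rr + s * a) 0 ^+ 2 / (3 * (C + a)) <=
    (1 - a) * (X0 ^+ 2 / (3 * C)) + a * (Y0 ^+ 2 / (3 * (C + 1))).
  apply: (le_trans (y := ((1 - a) * X0 + a * Y0) ^+ 2 / (3 * (C + a)))).
    apply: ler_wpM2r => //; rewrite invr_ge0; lra.
  case: (boolP (C == 0)) => [/eqP Ce | Cn].
    have R0 : Rr = 0 by move: rC; rewrite Ce normr_le0 => /eqP.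
    have X00 : X0 = 0 by rewrite /X0 R0 maxr0_r.
    rewrite X00 Ce.
    have -> : ((1 - a) * 0 + a * Y0) ^+ 2 / (3 * (0 + a)) = a * (Y0 ^+ 2 / 3).
      by field; lra.
    rewrite expr0n /= mul0r mulr0 add0r add0r mulr1; exact: lexx.
  have Cp : 0 < C by rewrite lt_neqAle eq_sym Cn C0.
  have -> : 3 * (C + a) = (1 - a) * (3 * C) + a * (3 * (C + 1)) by ring.
  apply: persp; lra.
rewrite /Phi -/X0 -/Y0.
have hc := @exp_cvx (1 - a) (X0 ^+ 2 / (3 * C)) (Y0 ^+ 2 / (3 * (C + 1))) ltac:(apply/andP; split; lra).
have e : 1 - (1 - a) = a by ring.
rewrite e in hc.
apply: le_trans hc; by rewrite ler_expR.
Qed.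

Lemma step (Rr C r : R) : 0 <= C -> `|Rr| <= C -> `|r| <= 1 ->
  Phi (Rr + r) (C + `|r|) <= Phi Rr C + wgt Rr C * r + Kc * `|r| / (C + 1).
Proof.
move=> C0 rC r1.
have Kh := Kc_ge.
have Ccore := @core Rr C C0 rC.
case: (boolP (r == 0)) => [/eqP -> | rn].
  rewrite normr0 !addr0 !mulr0 !mul0r !addr0; exact: lexx.
have ap : 0 < `|r| by rewrite normr_gt0.
have C1 : 0 < C + 1 by lra.
have Kp : 0 <= Kc / (C + 1) by apply: divr_ge0; lra.
have := le_total 0 r; case/orP => r0.
  have ra : r = 1 * `|r| by rewrite mul1r ger0_norm.
  have h := @step_gen Rr C `|r| 1 C0 rC ltac:(apply/andP; split; lra) (or_introl erefl).
  rewrite -ra in h; apply: (le_trans h).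
  rewrite /wgt.
  rewrite [X in _ <= _ + _ * X + _]ra mul1r.
  have hh := ler_wpM2l (ltW ap) Ccore.
  have -> : Kc * `|r| / (C + 1) = `|r| * (Kc / (C + 1)) by rewrite mulrAC mulrC.
  nra.
have ra : r = -1 * `|r| by rewrite ler0_norm // mulN1r opprK.
have h := @step_gen Rr C `|r| (-1) C0 rC ltac:(apply/andP; split; lra) (or_intror erefl).
rewrite -ra in h; apply: (le_trans h).
rewrite /wgt.
rewrite [X in _ <= _ + _ * X + _]ra mulN1r.
have hh := ler_wpM2l (ltW ap) Ccore.
have -> : Kc * `|r| / (C + 1) = `|r| * (Kc / (C + 1)) by rewrite mulrAC mulrC.
nra.
Qed.

Lemma ln_ge (y : R) : 0 < y -> 1 - y^-1 <= ln y.
Proof.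
move=> y0.
have yi : 0 < y^-1 by rewrite invr_gt0.
have h := @le_ln1Dx R (y^-1 - 1) ltac:(lra).
rewrite addrC subrK lnV ?posrE // in h.
lra.
Qed.

Lemma ln1p_lb (x : R) : 0 <= x <= 1 -> 7/12 * x <= ln (1 + x).
Proof.
move=> /andP[x0 x1].
have p1 : 0 < 1 + x / 2 by lra.
have p2 : 0 < (1 + x) / (1 + x / 2) by apply: divr_gt0; lra.
have e : 1 + x = (1 + x / 2) * ((1 + x) / (1 + x / 2)) by field; lra.
rewrite e lnM ?posrE //.
have h1 := @ln_ge _ p1. have h2 := @ln_ge _ p2.
have e1 : 1 - (1 + x / 2)^-1 = x / (2 + x) by fsc.
have e2 : 1 - ((1 + x) / (1 + x / 2))^-1 = x / (2 + 2 * x) by fsc.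
rewrite e1 in h1; rewrite e2 in h2.
have i3 : 3^-1 <= (2 + x)^-1 by rewrite lef_pV2 ?posrE; lra.
have h3 : x / 3 <= x / (2 + x) := ler_wpM2l x0 i3.
have i4 : 4^-1 <= (2 + 2 * x)^-1 by rewrite lef_pV2 ?posrE; lra.
have h4 : x / 4 <= x / (2 + 2 * x) := ler_wpM2l x0 i4.
lra.
Qed.

Definition Kp : R := 12/7 * Kc.

Lemma ln_step (C a : R) : 0 <= C -> 0 <= a <= 1 ->
  Kc * a / (C + 1) <= Kp * (ln (1 + (C + a)) - ln (1 + C)).
Proof.
move=> C0 /andP[a0 a1].
have p1 : 0 < 1 + C by lra.
have x0 : 0 <= a / (C + 1) by apply: divr_ge0; lra.
have x1 : a / (C + 1) <= 1 by rewrite ler_pdivrMr; lra.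
have e : 1 + (C + a) = (1 + C) * (1 + a / (C + 1)) by field; lra.
have p2 : 0 < 1 + a / (C + 1) by lra.
rewrite e lnM ?posrE //.
have -> : ln (1 + C) + ln (1 + a / (C + 1)) - ln (1 + C) = ln (1 + a / (C + 1)) by ring.
have h := @ln1p_lb (a / (C + 1)) ltac:(lra).
have Kh := Kc_ge.
rewrite /Kp.
have -> : Kc * a / (C + 1) = 12/7 * Kc * (7/12 * (a / (C + 1))) by field; lra.
apply: ler_wpM2l => //; lra.
Qed.

End Analytic.

Section Final.
Variable R : realType.

Lemma Kp_le : Kp R <= 3/2 * expR 1.
Proof.
rewrite /Kp /Kc.
have e : (17/15 : R) = 1 + 2/15 by field.
rewrite e expRD.
have h := @expR_le_inv R (2/15) ltac:(lra).
have h' : expR (2/15 : R) <= 15/13.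
  have ee : (1 - 2/15 : R)^-1 = 15/13 by field.
  by rewrite ee in h.
have e1 := expR_gt0 (1 : R).
nra.
Qed.

Lemma final_real (t T : nat) (Rj Cj nJ N : R) :
  (1 <= t <= T)%N -> 0 <= Cj <= nJ -> `|Rj| <= Cj -> 1 <= N -> N <= 1 + ln (T%:R) / ln 2 ->
  Phi Rj Cj <= 1 + Kp R * (t%:R * ln (1 + t%:R)) * N ->
  Rj <= Num.sqrt (3 * nJ * (1 + ln (t%:R) + ln (1 + ln (T%:R) / ln 2)
             + ln ((5 + 3 * ln (1 + t%:R)) / 2))).
Proof.
move=> /andP[t1 tT] /andP[C0 Cn] RC N1 NX hP.
case: (boolP (Rj <= 0)) => R0; first by apply: (le_trans R0); exact: sqrtr_ge0.
have Rp : 0 < Rj by rewrite ltNge.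
have Cp : 0 < Cj by have := ler_norm Rj; lra.
set L := ln (1 + t%:R).
set X := 1 + ln (T%:R) / ln 2.
set P := (5 + 3 * L) / 2.
set c := 1 + ln (t%:R) + ln X + ln P.
have tR : (1 : R) <= t%:R by rewrite ler1n.
have TR : (1 : R) <= T%:R by rewrite ler1n; apply: leq_trans tT.
have L0 : 0 <= L by rewrite /L; apply: ln_ge0; lra.
have X1 : 1 <= X by rewrite /X; lra.
have P0 : 0 < P by rewrite /P; lra.
have ec : expR c = expR 1 * t%:R * X * P.
  rewrite /c !expRD !lnK ?posrE //; lra.
have e1 : 1 <= expR (1 : R) by rewrite -[X in X <= _]expR0 ler_expR; lra.
have Kh := Kp_le.
have Kp0 : 0 <= Kp R by rewrite /Kp; have := Kc_ge R; lra.
have tL : 0 <= t%:R * L by apply: mulr_ge0; lra.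
have b1 : 1 + Kp R * (t%:R * L) * N <= N * t%:R * (1 + 3/2 * expR 1 * L).
  have : Kp R * (t%:R * L) * N <= 3/2 * expR 1 * (t%:R * L) * N.
    apply: ler_wpM2r; first lra. apply: ler_wpM2r => //.
  have : 1 <= N * t%:R by nra.
  nra.
have b2 : N * t%:R * (1 + 3/2 * expR 1 * L) <= X * t%:R * (expR 1 * P).
  have : 1 + 3/2 * expR 1 * L <= expR 1 * P by rewrite /P; nra.
  have : N * t%:R <= X * t%:R by apply: ler_wpM2r; rewrite /X; lra.
  have : 0 <= 1 + 3/2 * expR 1 * L by nra.
  move=> h0 h1 h2.
  apply: (le_trans (y := X * t%:R * (1 + 3/2 * expR 1 * L))).
    exact: ler_wpM2r.
  apply: ler_wpM2l => //; apply: mulr_ge0; lra.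
have hc : Phi Rj Cj <= expR c.
  rewrite ec; rewrite -/L in hP.
  have -> : expR 1 * t%:R * X * P = X * t%:R * (expR 1 * P) by ring.
  exact: (le_trans hP (le_trans b1 b2)).
rewrite Phi_pos in hc; last lra.
rewrite ler_expR in hc.
have q0 : 0 <= Rj ^+ 2 / (3 * Cj) by apply: divr_ge0; [exact: sqr_ge0 | lra].
have c0 : 0 <= c by lra.
have h3 : Rj ^+ 2 <= 3 * Cj * c.
  by move: hc; rewrite ler_pdivrMr; [rewrite mulrC | lra].
have h4 : Rj ^+ 2 <= 3 * nJ * c.
  apply: (le_trans h3); apply: ler_wpM2r => //; lra.
rewrite -(ger0_norm (ltW Rp)) -sqrtr_sqr ler_sqrt //.
nra.
Qed.

End Final.

Lemma idx_inI (k t : nat) : (1 <= t)%N -> inI k (idx k t) t.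
Proof.
move=> t1; rewrite /inI /lo /hi /idx.
have n0 : (0 < 2 ^ k)%N by rewrite expn_gt0.
set n := (2 ^ k)%N in n0 *.
have := divn_eq (t - 1)%N n; have := ltn_pmod (t - 1)%N n0.
move: ((t - 1) %/ n)%N ((t - 1) %% n)%N => q r.
rewrite subn1 /= mulSn.
nia.
Qed.

Lemma inI_idx (k i t : nat) : (0 < i)%N -> inI k i t -> i = idx k t.
Proof.
move=> i0; rewrite /inI /lo /hi /idx => /andP[h1 h2].
have n0 : (0 < 2 ^ k)%N by rewrite expn_gt0.
set n := (2 ^ k)%N in n0 h1 h2 *.
have := divn_eq (t - 1)%N n; have := ltn_pmod (t - 1)%N n0.
move: ((t - 1) %/ n)%N ((t - 1) %% n)%N => q r hr he.
have a1 : ((i - 1) * n < q.+1 * n)%N by rewrite mulSn; lia.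
have a2 : (q * n < i * n)%N by lia.
rewrite ltn_pmul2r // in a1; rewrite ltn_pmul2r // in a2.
lia.
Qed.

Lemma idx_ge1 k t : (0 < idx k t)%N.
Proof. by []. Qed.

Lemma idx_le k t : (1 <= t)%N -> (idx k t <= t)%N.
Proof.
move=> t1; rewrite /idx.
have : ((t - 1) %/ 2 ^ k <= t - 1)%N by apply: leq_div.
lia.
Qed.

Lemma lo_ge1 k i : (1 <= lo k i)%N.
Proof. by []. Qed.

Lemma i_le_lo k i : (0 < i)%N -> (i <= lo k i)%N.
Proof.
move=> i0; rewrite /lo.
have : (1 <= 2 ^ k)%N by rewrite expn_gt0.
nia.
Qed.

Section Global.
Variables (R : realType) (d T : nat) (D G : R) (Omega : 'rV[R]_d -> Prop)
  (f : nat -> 'rV[R]_d -> R) (grad : nat -> 'rV[R]_d -> 'rV[R]_d)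
  (proj : 'rV[R]_d -> 'rV[R]_d)
  (wI : nat -> nat -> nat -> 'rV[R]_d) (w : nat -> 'rV[R]_d).
Hypothesis Hoco : OCO_A3 T Omega f grad proj.
Hypothesis Hrun : AOD_run T D G Omega f grad proj wI w.

Lemma Om_cvx x y (l : R) : Omega x -> Omega y -> 0 <= l <= 1 -> Omega (l *: x + (1 - l) *: y).
Proof. by case: Hoco => H _; apply: H. Qed.

Lemma Om_proj x : Omega (proj x).
Proof. by case: Hoco => _ [H _]. Qed.

Lemma f_cvx t : (1 <= t <= T)%N -> forall x y (l : R), Omega x -> Omega y -> 0 <= l <= 1 ->
  f t (l *: x + (1 - l) *: y) <= l * f t x + (1 - l) * f t y.
Proof. by case: Hoco => _ [_ [_ H]] ht; case: (H t ht). Qed.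

Lemma f_01 t x : (1 <= t <= T)%N -> Omega x -> 0 <= f t x <= 1.
Proof. by case: Hoco => _ [_ [_ H]] ht; case: (H t ht) => _ [_ H3]; apply: H3. Qed.

Lemma wI_in k i u : inD T k i -> inI k i u -> (u <= T)%N -> Omega (wI k i u).
Proof.
case: Hrun => H1 [H2 [H3 _]] hD hI uT.
case: (ltngtP (lo k i) u) => hu.
- have hI' : inI k i u.-1 by move: hI; rewrite /inI; lia.
  have e := H3 k i u.-1 hD hI' ltac:(rewrite prednK //; lia) ltac:(rewrite prednK //; lia).
  rewrite prednK in e; last by lia.
  by rewrite e; apply: Om_proj.
- by move: hI; rewrite /inI; lia.
- move: (hD); rewrite /inD => /andP[hk hi].
  case: (ltngtP i 1) => h1.
  + lia.
  + rewrite -hu H2 //; [exact: Om_proj | by rewrite hu].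
  + have -> : i = 1%N by lia.
    have -> : u = 1%N by rewrite -hu h1.
    exact: H1.
Qed.

Lemma Cg_ge0 k i t : 0 <= Cg f w wI k i t.
Proof. by apply: sumr_ge0 => u _; exact: normr_ge0. Qed.

Lemma Rg_le_Cg k i t : `|Rg f w wI k i t| <= Cg f w wI k i t.
Proof. exact: ler_norm_sum. Qed.

Lemma wgt_ge0 (r c : R) : 0 <= c -> 0 <= wgt r c.
Proof.
move=> c0; rewrite /wgt; apply: divr_ge0; last lra.
rewrite subr_ge0; apply: Phi_mono; lra.
Qed.

Lemma uw_ge0 k t : 0 <= uw f w wI k t.
Proof. by apply: wgt_ge0; exact: Cg_ge0. Qed.

Lemma idx0 t : (1 <= t)%N -> idx 0 t = t.
Proof. by move=> t1; rewrite /idx expn0 divn1 subn1 prednK. Qed.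

Lemma uw0_gt0 t : (1 <= t)%N -> 0 < uw f w wI 0 t.
Proof.
move=> t1; rewrite /uw idx0 // /Rg /Cg.
have -> : lo 0 t = t by rewrite /lo expn0 muln1 subn1 prednK.
rewrite !big_geq //.
rewrite /wgt !add0r.
rewrite (@Phi_neg _ (-1)); last lra.
rewrite Phi_pos; last lra.
rewrite expr1n mulr1 mul1r.
apply: divr_gt0; last lra.
rewrite subr_gt0 expR_gt1; rewrite ?invr_gt0 ?mulr1; lra.
Qed.

Lemma wsum_gt0 t : (1 <= t <= T)%N -> 0 < wsum f w wI T t.
Proof.
move=> /andP[t1 tT]; have T1 : (1 <= T)%N by apply: leq_trans t1 tT.
rewrite /wsum big_ltn_cond // expn0 T1.
apply: ltr_pwDl; first exact: uw0_gt0.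
by apply: sumr_ge0 => k _; exact: uw_ge0.
Qed.

Lemma cvx_comb (g : 'rV[R]_d -> R) :
  (forall x y (l : R), Omega x -> Omega y -> 0 <= l <= 1 ->
     g (l *: x + (1 - l) *: y) <= l * g x + (1 - l) * g y) ->
  forall (s : seq nat) (P : pred nat) (lam : nat -> R) (x : nat -> 'rV[R]_d),
  (forall j, P j -> 0 <= lam j /\ Omega (x j)) ->
  0 < \sum_(j <- s | P j) lam j ->
  Omega (\sum_(j <- s | P j) (lam j / \sum_(j <- s | P j) lam j) *: x j) /\
  g (\sum_(j <- s | P j) (lam j / \sum_(j <- s | P j) lam j) *: x j) <=
     \sum_(j <- s | P j) (lam j / \sum_(j <- s | P j) lam j) * g (x j).
Proof.
move=> gc s P lam x hP; elim: s => [|j s IH] hS.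
  by move: hS; rewrite big_nil ltxx.
move: hS; rewrite !big_cons.
case: (boolP (P j)) => Pj; last by move=> hS; apply: IH.
move=> hS.
set S' := \sum_(i <- s | P i) lam i in hS *.
have S'0 : 0 <= S' by apply: sumr_ge0 => i Pi; case: (hP i Pi).
have [lj0 xj] := hP j Pj.
case: (boolP (S' == 0)) => [/eqP S'e | S'n].
  have zer : forall i, i \in s -> P i -> lam i = 0.
    move=> i ins Pi.
    have := S'e; move/eqP; rewrite psumr_eq0; last by move=> i0 Pi0; case: (hP i0 Pi0).
    by move/allP => /(_ i ins); rewrite Pi /= => /eqP.
  rewrite S'e addr0.
  rewrite big_seq_cond big1; last by move=> i /andP[ins Pi]; rewrite zer // mul0r scale0r.
  rewrite [X in _ <= _ + X]big_seq_cond big1; last by move=> i /andP[ins Pi]; rewrite zer // !mul0r.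
  rewrite S'e addr0 in hS.
  rewrite divff ?gt_eqF // scale1r mul1r !addr0; split => //; exact: lexx.
have S'p : 0 < S' by rewrite lt_neqAle eq_sym S'n S'0.
have [IH1 IH2] := IH S'p.
set S := lam j + S'.
have Sp : 0 < S by rewrite /S; lra.
set l := lam j / S.
have l01 : 0 <= l <= 1.
  apply/andP; split; first by apply: divr_ge0; lra.
  by rewrite /l ler_pdivrMr // mul1r /S; lra.
have e1 : \sum_(i <- s | P i) (lam i / S) *: x i =
   (1 - l) *: \sum_(i <- s | P i) (lam i / S') *: x i.
  rewrite scaler_sumr; apply: eq_bigr => i _; rewrite scalerA; congr (_ *: _).
  rewrite /l /S; field; apply/andP; split; lra.
have e2 : \sum_(i <- s | P i) (lam i / S) * g (x i) =
   (1 - l) * \sum_(i <- s | P i) (lam i / S') * g (x i).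
  rewrite mulr_sumr; apply: eq_bigr => i _; rewrite mulrA; congr (_ * _).
  rewrite /l /S; field; apply/andP; split; lra.
rewrite -/S -/l e1 e2; split; first exact: Om_cvx.
apply: le_trans (gc _ _ _ xj IH1 l01) _.
apply: lerD; first exact: lexx.
apply: ler_wpM2l => //; lra.
Qed.

Lemma w_props t : (1 <= t <= T)%N ->
  Omega (w t) /\
  \sum_(0 <= k < T.+1 | (2 ^ k <= T)%N)
      uw f w wI k t * (f t (w t) - f t (wI k (idx k t) t)) <= 0.
Proof.
move=> ht; have [t1 tT] := andP ht.
have hw : w t = meta_point f w wI T t by case: Hrun => _ [_ [_ H]]; apply: H.
have Wp := @wsum_gt0 t ht.
have hP : forall k, (2 ^ k <= T)%N -> 0 <= uw f w wI k t /\ Omega (wI k (idx k t) t).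
  move=> k hk; split; first exact: uw_ge0.
  apply: wI_in => //; [by rewrite /inD hk | exact: idx_inI].
have [C1 C2] := @cvx_comb (f t) (@f_cvx t ht) (index_iota 0 T.+1) (fun k => (2 ^ k <= T)%N)
   (fun k => uw f w wI k t) (fun k => wI k (idx k t) t) hP Wp.
rewrite /meta_point /wsum in hw Wp.
rewrite hw; split => //.
set W := \sum_(0 <= k < T.+1 | (2 ^ k <= T)%N) uw f w wI k t in Wp C1 C2 *.
set F := f t _ in C2 *.
have e : \sum_(0 <= k < T.+1 | (2 ^ k <= T)%N) uw f w wI k t * (F - f t (wI k (idx k t) t)) =
   W * (F - \sum_(0 <= k < T.+1 | (2 ^ k <= T)%N) (uw f w wI k t / W) * f t (wI k (idx k t) t)).
  rewrite mulrBr /W mulr_suml.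
  rewrite -/W mulr_sumr -sumrB; apply: eq_bigr => k _.
  rewrite mulrBr; congr (_ - _); rewrite mulrA; congr (_ * _).
  by rewrite mulrC -mulrA mulVf ?gt_eqF // mulr1.
rewrite e; apply: mulr_ge0_le0; first lra.
by rewrite subr_le0.
Qed.

Definition rr k i u := f u (w u) - f u (wI k i u).
Definition Rp k i s := \sum_(lo k i <= u < s | (u <= hi k i)%N) rr k i u.
Definition Cp k i s := \sum_(lo k i <= u < s | (u <= hi k i)%N) `|rr k i u|.

Lemma rr_bound k i u : inD T k i -> inI k i u -> (u <= T)%N -> `|rr k i u| <= 1.
Proof.
move=> hD hI uT.
have u1 : (1 <= u)%N by move: hI; rewrite /inI /lo => /andP[h _]; apply: leq_trans h.
have hu : (1 <= u <= T)%N by rewrite u1 uT.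
have [hw _] := @w_props u hu.
have := @f_01 u (w u) hu hw.
have := @f_01 u (wI k i u) hu (@wI_in k i u hD hI uT).
rewrite /rr ler_norml => /andP[a1 a2] /andP[b1 b2].
apply/andP; split; lra.
Qed.

Lemma Cp_ge0 k i s : 0 <= Cp k i s.
Proof. by apply: sumr_ge0 => u _; exact: normr_ge0. Qed.

Lemma Rp_le_Cp k i s : `|Rp k i s| <= Cp k i s.
Proof. exact: ler_norm_sum. Qed.

Lemma sum_cond_recr (F : nat -> R) (m s h : nat) :
  \sum_(m <= u < s.+1 | (u <= h)%N) F u =
  \sum_(m <= u < s | (u <= h)%N) F u + (if (m <= s <= h)%N then F s else 0).
Proof.
case: (leqP m s) => ms /=.
  rewrite big_mkcond [in RHS]big_mkcond /= big_nat_recr //=.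
rewrite addr0 !big_geq //; exact: ltnW.
Qed.

Lemma Rp_S k i s : Rp k i s.+1 = Rp k i s + (if inI k i s then rr k i s else 0).
Proof. exact: sum_cond_recr. Qed.

Lemma Cp_S k i s : Cp k i s.+1 = Cp k i s + (if inI k i s then `|rr k i s| else 0).
Proof. exact: sum_cond_recr. Qed.

Lemma Rp_Rg k i s : (s <= (hi k i).+1)%N -> Rp k i s = Rg f w wI k i s.
Proof.
move=> sh; rewrite /Rp /Rg big_nat_cond [in RHS]big_nat_cond.
apply: eq_bigl => u; case: (boolP (lo k i <= u < s)%N) => //= /andP[_ us].
by rewrite -ltnS (leq_trans us sh).
Qed.

Lemma Cp_Cg k i s : (s <= (hi k i).+1)%N -> Cp k i s = Cg f w wI k i s.
Proof.
move=> sh; rewrite /Cp /Cg big_nat_cond [in RHS]big_nat_cond.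
apply: eq_bigl => u; case: (boolP (lo k i <= u < s)%N) => //= /andP[_ us].
by rewrite -ltnS (leq_trans us sh).
Qed.

Definition psi k i s := Phi (Rp k i s) (Cp k i s) - 1 - Kp R * ln (1 + Cp k i s).
Definition Psi s := \sum_(0 <= k < T.+1 | (2 ^ k <= T)%N) \sum_(1 <= i < T.+1) psi k i s.

Lemma psi_same k i s : ~~ inI k i s -> psi k i s.+1 = psi k i s.
Proof. by move=> h; rewrite /psi Rp_S Cp_S (negbTE h) !addr0. Qed.

Lemma psi_step k s : (2 ^ k <= T)%N -> (1 <= s <= T)%N ->
  psi k (idx k s) s.+1 - psi k (idx k s) s <= uw f w wI k s * rr k (idx k s) s.
Proof.
move=> hk hs; have [s1 sT] := andP hs.
have hI := @idx_inI k s s1.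
have hD : inD T k (idx k s) by rewrite /inD hk.
rewrite /psi Rp_S Cp_S hI.
have sh : (s <= (hi k (idx k s)).+1)%N by move: hI; rewrite /inI => /andP[_ h]; exact: leqW.
have eR := @Rp_Rg k (idx k s) s sh. have eC := @Cp_Cg k (idx k s) s sh.
set Rv := Rp k (idx k s) s in eR *.
set Cv := Cp k (idx k s) s in eC *.
set r := rr k (idx k s) s.
have C0 : 0 <= Cv := Cp_ge0 _ _ _.
have RC : `|Rv| <= Cv := Rp_le_Cp _ _ _.
have r1 : `|r| <= 1 := @rr_bound k (idx k s) s hD hI sT.
have h1 := @step R Rv Cv r C0 RC r1.
have h2 := @ln_step R Cv `|r| C0 ltac:(apply/andP; split => //; exact: normr_ge0).
have -> : uw f w wI k s = wgt Rv Cv by rewrite /uw eR eC.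
lra.
Qed.

Lemma sum_single (m n i0 : nat) (F : nat -> R) : (m <= i0 < n)%N ->
  (forall i, (m <= i < n)%N -> i != i0 -> F i = 0) -> \sum_(m <= i < n) F i = F i0.
Proof.
move=> hi0 hF.
rewrite (bigD1_seq i0) /=; last by rewrite /index_iota iota_uniq.
  rewrite big1_seq ?addr0 // => i /andP[ne ins]; apply: hF => //.
  by rewrite -mem_index_iota.
by rewrite mem_index_iota.
Qed.

Lemma Psi_step s : (1 <= s <= T)%N -> Psi s.+1 <= Psi s.
Proof.
move=> hs; have [s1 sT] := andP hs.
have e : Psi s.+1 - Psi s = \sum_(0 <= k < T.+1 | (2 ^ k <= T)%N)
    (psi k (idx k s) s.+1 - psi k (idx k s) s).
  rewrite /Psi -sumrB; apply: eq_bigr => k hk; rewrite -sumrB; apply: sum_single.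
    by rewrite idx_ge1 /= ltnS (leq_trans (@idx_le k s s1) sT).
  move=> i /andP[i1 _] ne.
  rewrite psi_same ?subrr //; apply/negP => hI.
  by move: ne; rewrite (@inI_idx k i s i1 hI) eqxx.
rewrite -subr_le0 e.
have [_ hW] := @w_props s hs.
apply: le_trans hW; apply: ler_sum => k hk; exact: psi_step.
Qed.

Lemma Psi1 : Psi 1 = 0.
Proof.
rewrite /Psi big1 // => k _; rewrite big1 // => i _.
rewrite /psi /Rp /Cp !big_geq ?lo_ge1 //.
by rewrite Phi_neg // addr0 ln1 mulr0 !subrr.
Qed.

Lemma Psi_le0 s : (s <= T)%N -> Psi s.+1 <= 0.
Proof.
elim: s => [|s IH] hs; first by rewrite Psi1.
apply: le_trans (IH (ltnW hs)).
apply: Psi_step; by rewrite hs.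
Qed.

Lemma le_sum_nat (m n j : nat) (P : pred nat) (F : nat -> R) : (m <= j < n)%N -> P j ->
  (forall i, P i -> 0 <= F i) -> F j <= \sum_(m <= i < n | P i) F i.
Proof.
move=> hj Pj hF.
rewrite big_mkcond (bigD1_seq j) /=; last by rewrite /index_iota iota_uniq.
  rewrite Pj lerDl; apply: sumr_ge0 => i _; case: (boolP (P i)) => Pi //; exact: hF.
by rewrite mem_index_iota.
Qed.

Lemma Cp_le k i t : inD T k i -> (t <= T)%N -> Cp k i t.+1 <= (t.+1 - lo k i)%N%:R.
Proof.
move=> hD tT.
rewrite /Cp big_mkcond.
apply: (le_trans (y := \sum_(lo k i <= u < t.+1) (1 : R))); last first.
  by rewrite sumr_const_nat.
rewrite big_nat_cond [X in _ <= X]big_nat_cond; apply: ler_sum => u /andP[/andP[h1 h2] _].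
case: (boolP (u <= hi k i)%N) => hu //.
apply: rr_bound => //; first by rewrite /inI h1 hu.
by apply: leq_trans tT; rewrite -ltnS.
Qed.

Lemma H_bound k i t : inD T k i -> (t <= T)%N ->
  Kp R * ln (1 + Cp k i t.+1) <= (if (i <= t)%N then Kp R * ln (1 + t%:R) else 0).
Proof.
move=> hD tT; have [hk i0] := andP hD.
have Kp0 : 0 <= Kp R by rewrite /Kp; have := Kc_ge R; lra.
have C0 := Cp_ge0 k i t.+1.
case: (boolP (i <= t)%N) => it.
  apply: ler_wpM2l => //.
  have h := @Cp_le k i t hD tT.
  have h2 : ((t.+1 - lo k i)%N%:R : R) <= t%:R.
    rewrite ler_nat; have := lo_ge1 k i; lia.
  rewrite ler_ln ?posrE; lra.
rewrite /Cp big_geq; last first.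
  have := @i_le_lo k i i0; lia.
by rewrite addr0 ln1 mulr0.
Qed.

Lemma sum_if_le (t n : nat) (c : R) : (t <= n)%N ->
  \sum_(1 <= i < n.+1) (if (i <= t)%N then c else 0) = c *+ t.
Proof.
move=> tn.
rewrite (@big_cat_nat _ _ _ t.+1) //=.
have e2 : \sum_(t.+1 <= i < n.+1) (if (i <= t)%N then c else 0) = 0.
  rewrite big_nat_cond big1 // => i; rewrite andbT => /andP[h1 _]; by rewrite leqNgt h1.
have e1 : \sum_(1 <= i < t.+1) (if (i <= t)%N then c else 0) = \sum_(1 <= i < t.+1) c.
  rewrite big_nat_cond [RHS]big_nat_cond; apply: eq_bigr => i; rewrite andbT => /andP[_ h2].
  by rewrite -ltnS h2.
by rewrite e1 e2 addr0 sumr_const_nat subn1.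
Qed.

Definition nlev := \sum_(0 <= k < T.+1 | (2 ^ k <= T)%N) (1 : R).

Lemma phiJ k0 i0 t : inD T k0 i0 -> inI k0 i0 t -> (t <= T)%N ->
  Phi (Rp k0 i0 t.+1) (Cp k0 i0 t.+1) <= 1 + Kp R * (t%:R * ln (1 + t%:R)) * nlev.
Proof.
move=> hD hI tT.
have hPsi := @Psi_le0 t tT.
set Gs := \sum_(0 <= k < T.+1 | (2 ^ k <= T)%N) \sum_(1 <= i < T.+1)
            (Phi (Rp k i t.+1) (Cp k i t.+1) - 1).
set Hs := \sum_(0 <= k < T.+1 | (2 ^ k <= T)%N) \sum_(1 <= i < T.+1)
            (Kp R * ln (1 + Cp k i t.+1)).
have eS : Psi t.+1 = Gs - Hs.
  rewrite /Psi /Gs /Hs -sumrB; apply: eq_bigr => k _; rewrite -sumrB; apply: eq_bigr => i _.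
  by rewrite /psi.
have hH : Hs <= Kp R * (t%:R * ln (1 + t%:R)) * nlev.
  rewrite /nlev mulr_sumr; apply: ler_sum => k hk.
  rewrite mulr1.
  apply: (le_trans (y := \sum_(1 <= i < T.+1) (if (i <= t)%N then Kp R * ln (1 + t%:R) else 0))).
    rewrite big_nat_cond [X in _ <= X]big_nat_cond; apply: ler_sum => i /andP[/andP[i1 _] _].
    by apply: H_bound => //; rewrite /inD hk.
  rewrite sum_if_le //.
  have -> : Kp R * ln (1 + t%:R) *+ t = Kp R * (t%:R * ln (1 + t%:R)) by rewrite -mulr_natr; ring.
  exact: lexx.
have [hk ip] := andP hD.
have k0T : (k0 < T.+1)%N.
  rewrite ltnS; apply: leq_trans hk; apply: ltnW; exact: ltn_expl.
have i0T : (1 <= i0 < T.+1)%N.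
  rewrite ip /= ltnS; apply: leq_trans tT; apply: leq_trans (@i_le_lo k0 i0 ip) _.
  by move: hI; rewrite /inI => /andP[].
have G0 : forall k i, 0 <= Phi (Rp k i t.+1) (Cp k i t.+1) - 1.
  move=> k i; rewrite subr_ge0; apply: Phi_ge1; exact: Cp_ge0.
have hG : Phi (Rp k0 i0 t.+1) (Cp k0 i0 t.+1) - 1 <= Gs.
  rewrite /Gs.
  apply: le_trans (@le_sum_nat 0 T.+1 k0 (fun k => (2 ^ k <= T)%N)
     (fun k => \sum_(1 <= i < T.+1) (Phi (Rp k i t.+1) (Cp k i t.+1) - 1)) k0T hk _).
    by apply: (@le_sum_nat 1 T.+1 i0 xpredT) => // i _; exact: G0.
  move=> k _; apply: sumr_ge0 => i _; exact: G0.
lra.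
Qed.

Lemma sum_if_le0 (t n : nat) (c : R) : (t <= n)%N ->
  \sum_(0 <= i < n.+1) (if (i <= t)%N then c else 0) = c *+ t.+1.
Proof.
move=> tn.
rewrite (@big_cat_nat _ _ _ t.+1) //=.
have e2 : \sum_(t.+1 <= i < n.+1) (if (i <= t)%N then c else 0) = 0.
  rewrite big_nat_cond big1 // => i; rewrite andbT => /andP[h1 _]; by rewrite leqNgt h1.
have e1 : \sum_(0 <= i < t.+1) (if (i <= t)%N then c else 0) = \sum_(0 <= i < t.+1) c.
  rewrite big_nat_cond [RHS]big_nat_cond; apply: eq_bigr => i; rewrite andbT => /andP[_ h2].
  by rewrite -ltnS h2.
by rewrite e1 e2 addr0 sumr_const_nat subn0.
Qed.

Lemma nlev_ge1 : (1 <= T)%N -> 1 <= nlev.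
Proof.
move=> T1; rewrite /nlev.
by apply: (@le_sum_nat 0 T.+1 0 (fun k => (2 ^ k <= T)%N) (fun _ => 1)) => //; rewrite expn0.
Qed.

Lemma nlev_le : (1 <= T)%N -> nlev <= 1 + ln (T%:R) / ln 2.
Proof.
move=> T1.
set K0 := trunc_log 2 T.
have hK : (2 ^ K0 <= T)%N by apply: trunc_logP.
have K0T : (K0 <= T)%N by apply: leq_trans hK; apply: ltnW; exact: ltn_expl.
have h1 : nlev <= (K0.+1)%:R.
  rewrite /nlev big_mkcond -[X in _ <= X]mulr1n -(@sum_if_le0 K0 T 1 K0T).
  apply: ler_sum => k _.
  case: (boolP (2 ^ k <= T)%N) => hk //.
  by rewrite (trunc_log_max _ hk).
  by case: (k <= K0)%N.
have l2 : 0 < ln (2 : R) by apply: ln_gt0; lra.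
have h2 : (K0%:R : R) * ln 2 <= ln (T%:R).
  have e : ln ((2 : R) ^+ K0) = K0%:R * ln 2 by rewrite lnXn // mulr_natl.
  rewrite -e ler_ln ?posrE ?exprn_gt0 //; last by rewrite ltr0n.
    by rewrite -natrX ler_nat.
have h3 : (K0%:R : R) <= ln (T%:R) / ln 2 by rewrite ler_pdivlMr.
move: h1; rewrite -addn1 natrD; lra.
Qed.

Lemma lemma1_sec k i t : inD T k i -> inI k i t -> (t <= T)%N ->
  let c := 1 + ln (t%:R) + ln (1 + ln (T%:R) / ln 2)
             + ln ((5 + 3 * ln (1 + t%:R)) / 2) in
  \sum_(lo k i <= u < t.+1) f u (w u) - \sum_(lo k i <= u < t.+1) f u (wI k i u)
    <= Num.sqrt (3 * (t - lo k i + 1)%N%:R * c).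
Proof.
move=> hD hI tT; cbv zeta.
have [lt ht] := andP hI.
have t1 : (1 <= t)%N by apply: leq_trans lt.
have T1 : (1 <= T)%N by apply: leq_trans tT.
have hphi := @phiJ k i t hD hI tT.
have eR : Rp k i t.+1 = \sum_(lo k i <= u < t.+1) f u (w u) - \sum_(lo k i <= u < t.+1) f u (wI k i u).
  by rewrite Rp_Rg // /Rg sumrB.
rewrite -eR.
apply: (@final_real R t T _ (Cp k i t.+1) _ nlev).
- by rewrite t1 tT.
- apply/andP; split; first exact: Cp_ge0.
  have h := @Cp_le k i t hD tT.
  have -> : (t - lo k i + 1)%N = (t.+1 - lo k i)%N by lia.
  exact: h.
- exact: Rp_le_Cp.
- exact: nlev_ge1.
- exact: nlev_le.
- exact: hphi.
Qed.

End Global.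

Theorem lemma1 (R : realType) (d T : nat) (D G : R)
  (Omega : 'rV[R]_d -> Prop) (f : nat -> 'rV[R]_d -> R)
  (grad : nat -> 'rV[R]_d -> 'rV[R]_d) (proj : 'rV[R]_d -> 'rV[R]_d)
  (wI : nat -> nat -> nat -> 'rV[R]_d) (w : nat -> 'rV[R]_d) :
  0 < D -> 0 < G ->
  OCO_A3 T Omega f grad proj ->
  AOD_run T D G Omega f grad proj wI w ->
  forall (k i t : nat), inD T k i -> inI k i t -> (t <= T)%N ->
  let c := 1 + ln (t%:R) + ln (1 + ln (T%:R) / ln 2)
             + ln ((5 + 3 * ln (1 + t%:R)) / 2) in
  \sum_(lo k i <= u < t.+1) f u (w u) - \sum_(lo k i <= u < t.+1) f u (wI k i u)
    <= Num.sqrt (3 * (t - lo k i + 1)%N%:R * c).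
Proof.
move=> HD HG Hoco Hrun k i t hD hI tT.
exact: (@lemma1_sec R d T D G Omega f grad proj wI w Hoco Hrun k i t hD hI tT).
Qed.
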